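(* Suppose $$S^{**}<\min\left\{\frac{\mu_1'-\mu_0}{\alpha_1},\ \frac{\mu_2'-\mu_0}{\alpha_2},\ \frac{\mu_3'-\mu_0}{\hat\alpha_3}\right\},$$ where $\hat\alpha_3=\alpha_3+\beta_1+\beta_2$. Then for every solution of the system below with nonnegative initial data and $S(0)>0$, $$\lim_{t\to\infty}I_1(t)=\lim_{t\to\infty}I_2(t)=\lim_{t\to\infty}I_{12}(t)=\lim_{t\to\infty}R(t)=0,\qquad \lim_{t\to\infty}S(t)=S^{**},$$ i.e. the disease-free equilibrium $G_2=(S^{**},0,0,0,0)$ is globally asymptotically stable (with respect to solutions with $S(0)>0$).
   Context: Consider, for $t\ge0$, the system $S'=\big(b(1-\tfrac{N}{K})-\alpha_1I_1-\alpha_2I_2-(\beta_1+\beta_2+\alpha_3)I_{12}-\mu_0\big)S$, $I_1'=\big(b(1-\tfrac{N}{K})+\alpha_1S-\eta_1I_{12}-\gamma_1I_2-\mu_1\big)I_1+\beta_1SI_{12}$, $I_2'=\big(b(1-\tfrac{N}{K})+\alpha_2S-\eta_2I_{12}-\gamma_2I_1-\mu_2\big)I_2+\beta_2SI_{12}$, $I_{12}'=\big(b(1-\tfrac{N}{K})+\alpha_3S+\eta_1I_1+\eta_2I_2-\mu_3\big)I_{12}+(\gamma_1+\gamma_2)I_1I_2$, $R'=\big(b(1-\tfrac{N}{K})-\mu_4'\big)R+\rho_1I_1+\rho_2I_2+\rho_3I_{12}$, where $N=S+I_1+I_2+I_{12}+R$. All parameters $b,K,\alpha_i,\beta_i,\gamma_i,\eta_i,\rho_i,\mu_0,\mu_i'$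 are positive and $\mu_i=\rho_i+\mu_i'$ for $i=1,2,3$. Standing assumptions: $b>\mu_0$, $b>\mu_i$ ($i=1,2,3$), $b>\mu_4'$, and $\mu_0<\mu_4'<\mu_j'$ for $j=1,2,3$. Set $\sigma_k=(\mu_k-\mu_0)/\alpha_k$ ($k=1,2,3$), assumed to satisfy $\sigma_1<\sigma_2<\sigma_3$, and $S^{**}=\frac{K}{b}(b-\mu_0)$. *)

(* Defs.v *)
From Stdlib Require Import Reals.
From Coquelicot Require Import Coquelicot.
Open Scope R_scope.

(* Classical solution on [0, +oo) of the system:
   each component is right-continuous at 0 and differentiable at every t > 0
   with the prescribed derivative.  Here mu_i = rho_i + mu_i' (i = 1,2,3). *)
Definition is_solution
  (b K a1 a2 a3 be1 be2 g1 g2 e1 e2 r1 r2 r3 m0 m1' m2' m3' m4' : R)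
  (S I1 I2 I12 Rc : R -> R) : Prop :=
  let m1 := r1 + m1' in
  let m2 := r2 + m2' in
  let m3 := r3 + m3' in
  let N := fun t => S t + I1 t + I2 t + I12 t + Rc t in
  filterlim S (at_right 0) (locally (S 0)) /\
  filterlim I1 (at_right 0) (locally (I1 0)) /\
  filterlim I2 (at_right 0) (locally (I2 0)) /\
  filterlim I12 (at_right 0) (locally (I12 0)) /\
  filterlim Rc (at_right 0) (locally (Rc 0)) /\
  forall t, 0 < t ->
    is_derive S t
      ((b * (1 - N t / K) - a1 * I1 t - a2 * I2 t
        - (be1 + be2 + a3) * I12 t - m0) * S t) /\
    is_derive I1 t
      ((b * (1 - N t / K) + a1 * S t - e1 * I12 t - g1 * I2 t - m1) * I1 t
       + be1 * S t * I12 t) /\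
    is_derive I2 t
      ((b * (1 - N t / K) + a2 * S t - e2 * I12 t - g2 * I1 t - m2) * I2 t
       + be2 * S t * I12 t) /\
    is_derive I12 t
      ((b * (1 - N t / K) + a3 * S t + e1 * I1 t + e2 * I2 t - m3) * I12 t
       + (g1 + g2) * I1 t * I2 t) /\
    is_derive Rc t
      ((b * (1 - N t / K) - m4') * Rc t + r1 * I1 t + r2 * I2 t + r3 * I12 t).

(* Main.v *)
Require Import Defs.
From Stdlib Require Import Reals Lra Psatz.
From Coquelicot Require Import Coquelicot.
Open Scope R_scope.


Lemma D_plus f g x a c : is_derive f x a -> is_derive g x c -> is_derive (fun t => f t + g t) x (a + c).
Proof. intros; now apply (is_derive_plus f g). Qed.
Lemma D_minus f g x a c : is_derive f x a -> is_derive g x c -> is_derive (fun t => f t - g t) x (a - c).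
Proof. intros; now apply (is_derive_minus f g). Qed.
Lemma D_mult f g x a c : is_derive f x a -> is_derive g x c -> is_derive (fun t => f t * g t) x (a * g x + f x * c).
Proof. intros; apply (is_derive_mult f g); auto. intros; apply Rmult_comm. Qed.
Lemma D_comp f g x a c : is_derive f (g x) a -> is_derive g x c -> is_derive (fun t => f (g t)) x (c * a).
Proof. intros; now apply (is_derive_comp f g). Qed.
Lemma D_const (k x : R) : @is_derive R_AbsRing R_NormedModule (fun _ : R => k) x 0.
Proof. apply (@is_derive_const R_AbsRing R_NormedModule k x). Qed.
Lemma D_id (x : R) : @is_derive R_AbsRing R_NormedModule (fun t : R => t) x 1.
Proof. apply (@is_derive_id R_AbsRing x). Qed.
Lemma D_eq (f : R -> R) (x l l' : R) : is_derive f x l -> l = l' -> is_derive f x l'.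
Proof. intros H ->; exact H. Qed.

Definition q (y : R) := Rmin y 0 * Rmin y 0.

Lemma q_err x h : Rabs (q (x + h) - q x - 2 * Rmin x 0 * h) <= h * h.
Proof.
  unfold q, Rmin; destruct (Rle_dec (x+h) 0); destruct (Rle_dec x 0);
  rewrite Rabs_le_between; split; nra.
Qed.

Lemma D_q x : is_derive q x (2 * Rmin x 0).
Proof.
  apply is_derive_Reals. intros eps Heps.
  exists (mkposreal eps Heps). intros h Hh Hl. simpl in Hl.
  pose proof (q_err x h) as E.
  replace ((q (x + h) - q x) / h - 2 * Rmin x 0) with ((q (x + h) - q x - 2 * Rmin x 0 * h) / h) by (field; auto).
  rewrite Rabs_div by auto.
  apply Rmult_lt_reg_r with (Rabs h). now apply Rabs_pos_lt.
  unfold Rdiv; rewrite Rmult_assoc, Rinv_l by (now apply Rabs_no_R0).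
  rewrite Rmult_1_r.
  assert (h * h = Rabs h * Rabs h) by (rewrite <- Rabs_mult; rewrite Rabs_right; nra).
  assert (0 < Rabs h) by (now apply Rabs_pos_lt). nra.
Qed.

Lemma q_nonneg y : 0 <= q y.
Proof. unfold q; nra. Qed.

Lemma q_zero y : 0 <= y -> q y = 0.
Proof. unfold q, Rmin; intros; destruct (Rle_dec y 0); nra. Qed.

Lemma q_pos_neg y : q y <= 0 -> 0 <= y.
Proof. unfold q, Rmin; intros; destruct (Rle_dec y 0); nra. Qed.

Lemma mono f df a b : a <= b -> (forall t, a <= t <= b -> is_derive f t (df t)) ->
  (forall t, a <= t <= b -> df t <= 0) -> f b <= f a.
Proof.
  intros Hab Hd Hn.
  destruct (MVT_gen f a b df) as [c [Hc E]].
  - intros x Hx. rewrite Rmin_left, Rmax_right in Hx by lra. apply Hd; lra.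
  - intros x Hx. rewrite Rmin_left, Rmax_right in Hx by lra.
    apply continuity_pt_filterlim. apply (ex_derive_continuous f). eexists; apply Hd; lra.
  - rewrite Rmin_left, Rmax_right in Hc by lra. specialize (Hn c Hc). nra.
Qed.

Lemma mono0 f df G T : continuity_pt G 0 -> (forall t, 0 <= t -> G t = f t) ->
  (forall t, 0 < t <= T -> is_derive f t (df t)) ->
  (forall t, 0 < t <= T -> df t <= 0) -> forall t, 0 <= t <= T -> f t <= f 0.
Proof.
  intros HG HGf Hd Hn t Ht.
  destruct (Req_dec t 0) as [->|Ht0]; [lra|].
  apply Rnot_lt_le; intro Hlt.
  destruct (HG (f t - f 0)) as [del [Hdel Hc]]; [lra|].
  set (s := Rmin (del/2) (t/2)).
  assert (Hs : 0 < s) by (unfold s; apply Rmin_pos; lra).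
  assert (Hst : s <= t) by (unfold s; pose proof (Rmin_r (del/2) (t/2)); lra).
  assert (Hsd : s < del) by (unfold s; pose proof (Rmin_l (del/2) (t/2)); lra).
  assert (f t <= f s).
  { apply (mono f df s t); auto; intros; [apply Hd|apply Hn]; lra. }
  specialize (Hc s). simpl in Hc. unfold R_dist in Hc.
  rewrite !HGf in Hc by lra.
  assert (Rabs (f s - f 0) < f t - f 0).
  { apply Hc. split. unfold D_x, no_cond; split; auto; lra.
    rewrite Rminus_0_r, Rabs_right; lra. }
  rewrite Rabs_lt_between in H0. lra.
Qed.


Definition ext (f : R -> R) t := f (Rmax t 0).

Lemma ext_cont0 f : filterlim f (at_right 0) (locally (f 0)) -> continuity_pt (ext f) 0.
Proof.
  intros H eps Heps.
  destruct (H (fun y => Rabs (y - f 0) < eps)) as [del Hdel].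
  { exists (mkposreal eps Heps). intros y Hy. exact Hy. }
  exists del. split. apply cond_pos.
  intros x [_ Hx]. simpl in *. unfold R_dist in *. unfold ext.
  rewrite (Rmax_right 0 0) by lra.
  destruct (Rle_dec x 0).
  - rewrite Rmax_right by lra. rewrite Rminus_diag, Rabs_R0; lra.
  - rewrite Rmax_left by lra. apply Hdel; [|lra].
    unfold ball; simpl; unfold AbsRing_ball; simpl. unfold abs, minus, plus, opp; simpl.
    rewrite Rminus_0_r in Hx; rewrite Ropp_0, Rplus_0_r; exact Hx.
Qed.

Lemma ext_derive f t l : 0 < t -> is_derive f t l -> is_derive (ext f) t l.
Proof.
  intros Ht H. apply (is_derive_ext_loc f); auto.
  exists (mkposreal t Ht). intros u Hu. unfold ext.
  unfold ball in Hu; simpl in Hu; unfold AbsRing_ball in Hu; simpl in Hu.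
  unfold abs, minus, plus, opp in Hu; simpl in Hu.
  rewrite Rabs_lt_between in Hu. rewrite Rmax_left by lra. auto.
Qed.

Lemma ext_eq f t : 0 <= t -> ext f t = f t.
Proof. intros; unfold ext; now rewrite Rmax_left. Qed.

Lemma ext_cont f t : 0 <= t -> filterlim f (at_right 0) (locally (f 0)) ->
  (forall u, 0 < u -> ex_derive f u) -> continuity_pt (ext f) t.
Proof.
  intros Ht H0 Hd. destruct (Req_dec t 0) as [->|].
  - now apply ext_cont0.
  - destruct (Hd t) as [l Hl]; [lra|].
    apply continuity_pt_filterlim. apply (ex_derive_continuous (ext f)).
    exists l. apply ext_derive; auto; lra.
Qed.

Lemma bnd f T : 0 <= T -> filterlim f (at_right 0) (locally (f 0)) ->
  (forall u, 0 < u -> ex_derive f u) -> exists M, 0 <= M /\ forall t, 0 <= t <= T -> Rabs (f t) <= M.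
Proof.
  intros HT H0 Hd.
  destruct (continuity_ab_maj (ext f) 0 T HT) as [a [Ha _]].
  { intros; apply ext_cont; auto; lra. }
  destruct (continuity_ab_min (ext f) 0 T HT) as [c [Hc _]].
  { intros; apply ext_cont; auto; lra. }
  exists (Rabs (ext f a) + Rabs (ext f c)). split.
  pose proof (Rabs_pos (ext f a)); pose proof (Rabs_pos (ext f c)); lra.
  intros t Ht. specialize (Ha t Ht); specialize (Hc t Ht).
  rewrite (ext_eq f t) in Ha, Hc by lra.
  pose proof (Rle_abs (ext f a)).
  pose proof (Rabs_pos (ext f a)); pose proof (Rabs_pos (ext f c)).
  assert (- Rabs (ext f c) <= ext f c) by (pose proof (Rle_abs (- ext f c)); rewrite Rabs_Ropp in *; lra).
  apply Rabs_le; split; lra.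
Qed.

Lemma D_expl C x : is_derive (fun t => exp (C * t)) x (C * exp (C * x)).
Proof.
  apply (D_eq _ _ (C * exp (C * x))); [| reflexivity].
  apply (D_comp exp (fun t => C * t)).
  apply is_derive_exp. apply (D_eq _ _ (C * 1)); [|ring]. apply is_derive_scal, D_id.
Qed.

Lemma cont_expl C x : continuity_pt (fun t => exp (C * t)) x.
Proof.
  apply continuity_pt_filterlim. apply (ex_derive_continuous (fun t => exp (C*t))).
  eexists; apply D_expl.
Qed.

Lemma gron F dF G C T : continuity_pt G 0 -> (forall t, 0 <= t -> G t = F t) ->
  (forall t, 0 < t <= T -> is_derive F t (dF t)) ->
  (forall t, 0 < t <= T -> dF t <= C * F t) -> F 0 = 0 ->
  forall t, 0 <= t <= T -> F t <= 0.
Proof.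
  intros HG HGF Hd Hb H0 t Ht.
  assert (M := mono0 (fun t => F t * exp (- C * t)) (fun t => (dF t - C * F t) * exp (-C * t))
     (fun t => G t * exp (- C * t)) T).
  cbv beta in M.
  assert (F t * exp (- C * t) <= F 0 * exp (- C * 0)).
  { apply M; auto.
    - apply continuity_pt_mult; auto. apply cont_expl.
    - intros; now rewrite HGF.
    - intros u Hu. eapply D_eq. apply D_mult. apply Hd; auto. apply D_expl. simpl. ring.
    - intros u Hu. specialize (Hb u Hu). pose proof (exp_pos (-C*u)). nra. }
  rewrite H0, Rmult_0_l in H. pose proof (exp_pos (-C*t)). nra.
Qed.

Lemma decay F dF a al be : 0 < al -> (forall t, a <= t -> is_derive F t (dF t)) ->
  (forall t, a <= t -> dF t <= - al * F t + be) ->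
  forall t, a <= t -> F t <= be / al + Rabs (F a - be / al) * exp (- al * (t - a)).
Proof.
  intros Hal Hd Hb t Ht.
  assert (M := mono (fun t => (F t - be / al) * exp (al * t))
                    (fun t => (dF t + al * F t - be) * exp (al * t)) a t Ht).
  cbv beta in M.
  assert (H : (F t - be / al) * exp (al * t) <= (F a - be / al) * exp (al * a)).
  { apply M.
    - intros u Hu. eapply D_eq. apply D_mult. apply D_minus. apply Hd; lra. apply D_const.
      apply D_expl. simpl. field. lra.
    - intros u Hu. specialize (Hb u (proj1 Hu)). pose proof (exp_pos (al*u)). nra. }
  assert (E : exp (al * a) = exp (al * t) * exp (- al * (t - a))).
  { rewrite <- exp_plus. f_equal. ring. }
  rewrite E in H. pose proof (exp_pos (al*t)). pose proof (exp_pos (- al * (t - a))).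
  assert (F t - be / al <= (F a - be / al) * exp (- al * (t - a))).
  { apply Rmult_le_reg_r with (exp (al * t)); auto. nra. }
  pose proof (Rle_abs (F a - be / al)). nra.
Qed.

Lemma exp_small A al eps : 0 <= A -> 0 < al -> 0 < eps -> exists T0, forall s, T0 <= s -> A * exp (- al * s) <= eps.
Proof.
  intros HA Hal He. exists (A / (al * eps)). intros s Hs.
  assert (0 <= al * s).
  { assert (0 <= A / (al * eps)) by (apply Rdiv_le_0_compat; nra). nra. }
  assert (1 + al * s <= exp (al * s)).
  { destruct (Req_dec (al * s) 0) as [E|E]. rewrite E, exp_0; lra.
    left; apply exp_ineq1; lra. }
  assert (A <= eps * (al * s)).
  { apply Rmult_le_compat_l with (r := al * eps) in Hs; [|nra].
    unfold Rdiv in Hs. replace (al * eps * (A * / (al * eps))) with A in Hs by (field; lra). nra. }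
  replace (- al * s) with (- (al * s)) by ring. rewrite exp_Ropp.
  pose proof (exp_pos (al * s)).
  apply Rmult_le_reg_r with (exp (al * s)); auto. rewrite Rmult_assoc, Rinv_l by lra. nra.
Qed.

Lemma decay_ev F dF a al be : 0 < al -> (forall t, a <= t -> is_derive F t (dF t)) ->
  (forall t, a <= t -> dF t <= - al * F t + be) ->
  forall eps, 0 < eps -> exists T, forall t, T <= t -> F t <= be / al + eps.
Proof.
  intros Hal Hd Hb eps He.
  destruct (exp_small (Rabs (F a - be / al)) al eps (Rabs_pos _) Hal He) as [T0 HT0].
  exists (Rmax a (T0 + a)). intros t Ht.
  pose proof (Rmax_l a (T0 + a)); pose proof (Rmax_r a (T0 + a)).
  pose proof (decay F dF a al be Hal Hd Hb t ltac:(lra)).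
  specialize (HT0 (t - a) ltac:(lra)). lra.
Qed.


Definition rc (f : R -> R) := filterlim f (at_right 0) (locally (f 0)).

Lemma min_sq y : Rmin y 0 * y = Rmin y 0 * Rmin y 0.
Proof. unfold Rmin; destruct (Rle_dec y 0); ring. Qed.
Lemma min_np y : Rmin y 0 <= 0.
Proof. apply Rmin_r. Qed.
Lemma min_cross y z : Rmin y 0 * z <= Rmin y 0 * Rmin z 0.
Proof. unfold Rmin; destruct (Rle_dec y 0); destruct (Rle_dec z 0); nra. Qed.
Lemma min_tri0 z w M : Rabs z <= M -> Rabs w <= M -> M * (Rmin z 0 + Rmin w 0) <= z * w.
Proof.
  intros Hz Hw. apply Rabs_le_between in Hz; apply Rabs_le_between in Hw.
  unfold Rmin; destruct (Rle_dec z 0); destruct (Rle_dec w 0); nra.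
Qed.
Lemma min_tri y z w M : Rabs z <= M -> Rabs w <= M ->
  Rmin y 0 * (z * w) <= M * (Rmin y 0 * Rmin z 0 + Rmin y 0 * Rmin w 0).
Proof.
  intros Hz Hw. pose proof (min_tri0 z w M Hz Hw). pose proof (min_np y).
  replace (M * (Rmin y 0 * Rmin z 0 + Rmin y 0 * Rmin w 0)) with (Rmin y 0 * (M * (Rmin z 0 + Rmin w 0))) by ring.
  apply Rmult_le_compat_neg_l; auto.
Qed.

Lemma hb1 a C x P : a <= C -> 0 <= C -> 0 <= x -> x <= P -> a * x <= C * P.
Proof. intros. apply Rle_trans with (C * x). apply Rmult_le_compat_r; auto. apply Rmult_le_compat_l; auto. Qed.
Lemma hcross a c P : a * a + c * c <= P -> a <= 0 -> c <= 0 -> a * c <= P.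
Proof. intros. assert (0 <= (a - c) * (a - c)) by apply Rle_0_sqr. assert (0 <= a * c) by nra. nra. Qed.
Lemma hmono3 s M y z P : 0 <= s <= M -> y <= z -> 0 <= z -> z <= P -> s * y <= M * P.
Proof. intros. apply Rle_trans with (s * z). apply Rmult_le_compat_l; lra.
  apply Rle_trans with (M * z). apply Rmult_le_compat_r; lra. apply Rmult_le_compat_l; lra. Qed.

Lemma hneg A B : 0 <= A -> 0 < B -> - A * B <= 0.
Proof. intros; nra. Qed.
Lemma hposfin s e s0 : 0 < e -> 0 < s0 -> - s * e <= - s0 * 1 -> 0 < s.
Proof. intros; nra. Qed.

Lemma cont_q f t : continuity_pt f t -> continuity_pt (fun u => q (f u)) t.
Proof.
  intros H. apply (continuity_pt_comp f q); auto.
  apply continuity_pt_filterlim. apply (ex_derive_continuous q). eexists; apply D_q.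
Qed.

Lemma D_qf f t l : is_derive f t l -> is_derive (fun u => q (f u)) t (2 * Rmin (f t) 0 * l).
Proof. intros H. eapply D_eq. apply (D_comp q f). apply D_q. apply H. ring. Qed.

Lemma pos_generic (S I1 I2 I12 Rc gS A1 A2 A3 A4 : R -> R) (be1 be2 gg r1 r2 r3 : R) :
  0 <= be1 -> 0 <= be2 -> 0 <= gg -> 0 <= r1 -> 0 <= r2 -> 0 <= r3 ->
  rc S -> rc I1 -> rc I2 -> rc I12 -> rc Rc ->
  (forall t, 0 < t -> is_derive S t (gS t * S t) /\
     is_derive I1 t (A1 t * I1 t + be1 * S t * I12 t) /\
     is_derive I2 t (A2 t * I2 t + be2 * S t * I12 t) /\
     is_derive I12 t (A3 t * I12 t + gg * I1 t * I2 t) /\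
     is_derive Rc t (A4 t * Rc t + r1 * I1 t + r2 * I2 t + r3 * I12 t)) ->
  (forall T, 0 <= T -> exists C, forall t, 0 <= t <= T ->
     Rabs (gS t) <= C /\ Rabs (A1 t) <= C /\ Rabs (A2 t) <= C /\ Rabs (A3 t) <= C /\ Rabs (A4 t) <= C) ->
  0 < S 0 -> 0 <= I1 0 -> 0 <= I2 0 -> 0 <= I12 0 -> 0 <= Rc 0 ->
  forall t, 0 <= t -> 0 < S t /\ 0 <= I1 t /\ 0 <= I2 t /\ 0 <= I12 t /\ 0 <= Rc t.
Proof.
  intros Hb1 Hb2 Hgg Hr1 Hr2 Hr3 cS c1 c2 c3 c4 Hd HC HS0 H10 H20 H30 H40 t0 Ht0.
  assert (exS : forall u, 0 < u -> ex_derive S u) by (intros u Hu; eexists; exact (proj1 (Hd u Hu))).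
  assert (ex1 : forall u, 0 < u -> ex_derive I1 u) by (intros u Hu; eexists; exact (proj1 (proj2 (Hd u Hu)))).
  assert (ex2 : forall u, 0 < u -> ex_derive I2 u) by (intros u Hu; eexists; exact (proj1 (proj2 (proj2 (Hd u Hu))))).
  assert (ex3 : forall u, 0 < u -> ex_derive I12 u) by (intros u Hu; eexists; exact (proj1 (proj2 (proj2 (proj2 (Hd u Hu)))))).
  assert (ex4 : forall u, 0 < u -> ex_derive Rc u) by (intros u Hu; eexists; exact (proj2 (proj2 (proj2 (proj2 (Hd u Hu)))))).
  set (T := t0).
  assert (HT : 0 <= T) by (unfold T; lra).
  destruct (HC T HT) as [C HCb].
  assert (S0 : forall t, 0 <= t <= T -> 0 <= S t).
  { intros t Ht. apply q_pos_neg.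
    apply (gron (fun u => q (S u)) (fun u => 2 * Rmin (S u) 0 * (gS u * S u))
             (fun u => q (ext S u)) (2 * C) T); auto.
    - apply cont_q, ext_cont; auto; lra.
    - intros; now rewrite ext_eq.
    - intros u Hu. apply D_qf. exact (proj1 (Hd u ltac:(lra))).
    - intros u Hu. destruct (HCb u ltac:(lra)) as [Hg _].
      apply Rabs_le_between in Hg. unfold q.
      replace (2 * Rmin (S u) 0 * (gS u * S u)) with (2 * (gS u * (Rmin (S u) 0 * S u))) by ring.
      rewrite min_sq. rewrite Rmult_assoc. apply Rmult_le_compat_l. lra.
      apply hb1. lra. pose proof (Rabs_pos (gS u)); lra. apply Rle_0_sqr. lra.
    - apply q_zero; lra. }
  assert (Sp : forall t, 0 <= t <= T -> 0 < S t).
  { intros t Ht.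
    assert (Hm := mono0 (fun u => - S u * exp (C * u)) (fun u => - (gS u * S u + C * S u) * exp (C * u))
                        (fun u => - ext S u * exp (C * u)) T).
    cbv beta in Hm.
    assert (- S t * exp (C * t) <= - S 0 * exp (C * 0)).
    { apply Hm; auto.
      - apply continuity_pt_mult. apply continuity_pt_opp. apply ext_cont; auto; lra. apply cont_expl.
      - intros; now rewrite ext_eq.
      - intros u Hu. eapply D_eq. apply D_mult. eapply (D_eq (fun u => - S u)).
        apply (is_derive_opp S). exact (proj1 (Hd u ltac:(lra))). reflexivity. apply D_expl. simpl. unfold opp; simpl. ring.
      - intros u Hu. destruct (HCb u ltac:(lra)) as [Hg _]. apply Rabs_le_between in Hg.
        pose proof (S0 u ltac:(lra)). apply hneg; [|apply exp_pos].
        replace (gS u * S u + C * S u) with ((gS u + C) * S u) by ring. apply Rmult_le_pos; lra. }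
    rewrite Rmult_0_r, exp_0 in H. eapply hposfin; [apply exp_pos|apply HS0|apply H]. }
  set (phi := fun u => q (I1 u) + q (I2 u) + q (I12 u) + q (Rc u)).
  assert (exists M, 0 <= M /\ forall t, 0 <= t <= T -> Rabs (S t) <= M /\ Rabs (I1 t) <= M /\ Rabs (I2 t) <= M).
  { destruct (bnd S T HT cS exS) as [M0 [HM0 B0]].
    destruct (bnd I1 T HT c1 ex1) as [M1 [HM1 B1]].
    destruct (bnd I2 T HT c2 ex2) as [M2 [HM2 B2]].
    exists (M0 + M1 + M2). split. lra. intros t Ht.
    specialize (B0 t Ht); specialize (B1 t Ht); specialize (B2 t Ht). lra. }
  destruct H as [M [HM HMb]].
  assert (Phi : forall t, 0 <= t <= T -> phi t <= 0).
  { intros t Ht.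
    apply (gron phi (fun u => 2 * Rmin (I1 u) 0 * (A1 u * I1 u + be1 * S u * I12 u)
                             + 2 * Rmin (I2 u) 0 * (A2 u * I2 u + be2 * S u * I12 u)
                             + 2 * Rmin (I12 u) 0 * (A3 u * I12 u + gg * I1 u * I2 u)
                             + 2 * Rmin (Rc u) 0 * (A4 u * Rc u + r1 * I1 u + r2 * I2 u + r3 * I12 u))
             (fun u => q (ext I1 u) + q (ext I2 u) + q (ext I12 u) + q (ext Rc u))
             (2 * (C + be1 * M + be2 * M + 2 * gg * M + r1 + r2 + r3) * 4) T); auto.
    - repeat apply continuity_pt_plus; apply cont_q, ext_cont; auto; lra.
    - intros; unfold phi; rewrite !ext_eq; auto.
    - intros u Hu. destruct (Hd u ltac:(lra)) as (_&d1&d2&d3&d4).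
      unfold phi. repeat apply D_plus; apply D_qf; auto.
    - intros u Hu. destruct (HCb u ltac:(lra)) as (_&HA1&HA2&HA3&HA4).
      destruct (HMb u ltac:(lra)) as (HMS&HM1&HM2).
      pose proof (Sp u ltac:(lra)) as HSu.
      unfold phi, q.
      set (x1 := I1 u) in *; set (x2 := I2 u) in *; set (x3 := I12 u) in *; set (x4 := Rc u) in *.
      set (s := S u) in *.
      pose proof (min_sq x1); pose proof (min_sq x2); pose proof (min_sq x3); pose proof (min_sq x4).
      pose proof (min_cross x1 x3); pose proof (min_cross x2 x3); pose proof (min_cross x4 x1);
      pose proof (min_cross x4 x2); pose proof (min_cross x4 x3).
      pose proof (min_tri x3 x1 x2 M HM1 HM2).
      set (n1 := Rmin x1 0) in *; set (n2 := Rmin x2 0) in *; set (n3 := Rmin x3 0) in *; set (n4 := Rmin x4 0) in *.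
      assert (n1 <= 0) by apply min_np. assert (n2 <= 0) by apply min_np.
      assert (n3 <= 0) by apply min_np. assert (n4 <= 0) by apply min_np.
      apply Rabs_le_between in HA1; apply Rabs_le_between in HA2;
      apply Rabs_le_between in HA3; apply Rabs_le_between in HA4; apply Rabs_le_between in HMS.
      set (P := n1*n1 + n2*n2 + n3*n3 + n4*n4).
      assert (HP1 : 0 <= n1*n1) by apply Rle_0_sqr. assert (HP2 : 0 <= n2*n2) by apply Rle_0_sqr.
      assert (HP3 : 0 <= n3*n3) by apply Rle_0_sqr. assert (HP4 : 0 <= n4*n4) by apply Rle_0_sqr.
      assert (0 <= C) by (pose proof (Rabs_pos (A1 u)); lra).
      assert (B1 : A1 u * (n1 * n1) <= C * P) by (apply hb1; unfold P; lra).
      assert (B2 : A2 u * (n2 * n2) <= C * P) by (apply hb1; unfold P; lra).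
      assert (B3 : A3 u * (n3 * n3) <= C * P) by (apply hb1; unfold P; lra).
      assert (B4 : A4 u * (n4 * n4) <= C * P) by (apply hb1; unfold P; lra).
      assert (Q13 : n1 * n3 <= P) by (apply hcross; unfold P; lra).
      assert (Q23 : n2 * n3 <= P) by (apply hcross; unfold P; lra).
      assert (Q41 : n4 * n1 <= P) by (apply hcross; unfold P; lra).
      assert (Q42 : n4 * n2 <= P) by (apply hcross; unfold P; lra).
      assert (Q43 : n4 * n3 <= P) by (apply hcross; unfold P; lra).
      assert (Q31 : n3 * n1 <= P) by (apply hcross; unfold P; lra).
      assert (Q32 : n3 * n2 <= P) by (apply hcross; unfold P; lra).
      assert (0 <= P) by (unfold P; lra).
      assert (C1 : be1 * s * (n1 * x3) <= be1 * M * P).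
      { rewrite !Rmult_assoc. apply Rmult_le_compat_l; auto.
        apply (hmono3 s M (n1 * x3) (n1 * n3) P); auto. lra. nra. }
      assert (C2 : be2 * s * (n2 * x3) <= be2 * M * P).
      { rewrite !Rmult_assoc. apply Rmult_le_compat_l; auto.
        apply (hmono3 s M (n2 * x3) (n2 * n3) P); auto. lra. nra. }
      assert (C3 : gg * (n3 * (x1 * x2)) <= 2 * gg * M * P).
      { replace (2 * gg * M * P) with (gg * (2 * M * P)) by ring. apply Rmult_le_compat_l; auto.
        apply Rle_trans with (M * (n3 * n1 + n3 * n2)); auto.
        replace (2 * M * P) with (M * (P + P)) by ring. apply Rmult_le_compat_l; lra. }
      assert (C4 : r1 * (n4 * x1) + r2 * (n4 * x2) + r3 * (n4 * x3) <= r1 * P + r2 * P + r3 * P).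
      { assert (n4 * x1 <= P) by lra. assert (n4 * x2 <= P) by lra. assert (n4 * x3 <= P) by lra.
        apply Rplus_le_compat; [apply Rplus_le_compat|]; apply Rmult_le_compat_l; auto. }
      assert (E : 2 * n1 * (A1 u * x1 + be1 * s * x3) + 2 * n2 * (A2 u * x2 + be2 * s * x3) +
        2 * n3 * (A3 u * x3 + gg * x1 * x2) + 2 * n4 * (A4 u * x4 + r1 * x1 + r2 * x2 + r3 * x3)
        = 2 * (A1 u * (n1 * x1) + A2 u * (n2 * x2) + A3 u * (n3 * x3) + A4 u * (n4 * x4)
        + be1 * s * (n1 * x3) + be2 * s * (n2 * x3) + gg * (n3 * (x1 * x2))
        + (r1 * (n4 * x1) + r2 * (n4 * x2) + r3 * (n4 * x3)))) by ring.
      rewrite E. fold P.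
      assert (E1 : n1 * x1 = n1 * n1) by auto. assert (E2 : n2 * x2 = n2 * n2) by auto.
      assert (E3 : n3 * x3 = n3 * n3) by auto. assert (E4 : n4 * x4 = n4 * n4) by auto.
      rewrite E1, E2, E3, E4.
      assert (0 <= be1 * M * P) by (apply Rmult_le_pos; [apply Rmult_le_pos|]; lra).
      assert (0 <= be2 * M * P) by (apply Rmult_le_pos; [apply Rmult_le_pos|]; lra).
      assert (0 <= gg * M * P) by (apply Rmult_le_pos; [apply Rmult_le_pos|]; lra).
      assert (0 <= r1 * P) by (apply Rmult_le_pos; lra).
      assert (0 <= r2 * P) by (apply Rmult_le_pos; lra).
      assert (0 <= r3 * P) by (apply Rmult_le_pos; lra).
      assert (0 <= C * P) by (apply Rmult_le_pos; lra).
      replace (2 * (C + be1 * M + be2 * M + 2 * gg * M + r1 + r2 + r3) * 4 * P) with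
        (8 * (C * P) + 8 * (be1 * M * P) + 8 * (be2 * M * P) + 16 * (gg * M * P) + 8 * (r1 * P) + 8 * (r2 * P) + 8 * (r3 * P)) by ring.
      lra.
    - unfold phi. rewrite !q_zero; auto; lra. }
  specialize (Phi t0 ltac:(unfold T; lra)). unfold phi in Phi.
  pose proof (q_nonneg (I1 t0)); pose proof (q_nonneg (I2 t0)); pose proof (q_nonneg (I12 t0)); pose proof (q_nonneg (Rc t0)).
  unfold T in *.
  repeat split.
  - apply Sp; lra.
  - apply q_pos_neg; lra.
  - apply q_pos_neg; lra.
  - apply q_pos_neg; lra.
  - apply q_pos_neg; lra.
Qed.


Lemma alg_lower b K m0 m1 m2 m3 m4 mx s i1 i2 i3 r :
  0 < K -> m0 <= mx -> m1 <= mx -> m2 <= mx -> m3 <= mx -> m4 <= mx ->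
  0 <= s -> 0 <= i1 -> 0 <= i2 -> 0 <= i3 -> 0 <= r ->
  b * (1 - (s+i1+i2+i3+r) / K) * (s+i1+i2+i3+r) - m0 * s - m1 * i1 - m2 * i2 - m3 * i3 - m4 * r
  >= (s+i1+i2+i3+r) * (b - mx - b * (s+i1+i2+i3+r) / K).
Proof.
  intros. assert (m0 * s <= mx * s) by (apply Rmult_le_compat_r; lra).
  assert (m1 * i1 <= mx * i1) by (apply Rmult_le_compat_r; lra).
  assert (m2 * i2 <= mx * i2) by (apply Rmult_le_compat_r; lra).
  assert (m3 * i3 <= mx * i3) by (apply Rmult_le_compat_r; lra).
  assert (m4 * r <= mx * r) by (apply Rmult_le_compat_r; lra).
  assert (E : b * (1 - (s+i1+i2+i3+r) / K) * (s+i1+i2+i3+r) - mx * s - mx * i1 - mx * i2 - mx * i3 - mx * r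
     = (s+i1+i2+i3+r) * (b - mx - b * (s+i1+i2+i3+r) / K)) by (field; lra).
  lra.
Qed.

Lemma alg_upper b K m0 m1 m2 m3 m4 s i1 i2 i3 r :
  0 < K -> 0 < b -> m0 <= m1 -> m0 <= m2 -> m0 <= m3 -> m0 <= m4 ->
  0 <= s -> 0 <= i1 -> 0 <= i2 -> 0 <= i3 -> 0 <= r ->
  b * (1 - (s+i1+i2+i3+r) / K) * (s+i1+i2+i3+r) - m0 * s - m1 * i1 - m2 * i2 - m3 * i3 - m4 * r
  = b / K * (K / b * (b - m0) - (s+i1+i2+i3+r)) * (s+i1+i2+i3+r)
    - ((m1 - m0) * i1 + (m2 - m0) * i2 + (m3 - m0) * i3 + (m4 - m0) * r).
Proof. intros. field. lra. Qed.

Lemma q_le_bound y c : 0 <= c -> q y <= c -> - (c + 1) <= y.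
Proof.
  intros Hc H. unfold q, Rmin in H. destruct (Rle_dec y 0); [|lra].
  apply Rnot_lt_le. intro. nra.
Qed.

Lemma q_le_sq y d : 0 < d -> q y <= d * d -> - d <= y.
Proof.
  intros Hc H. unfold q, Rmin in H. destruct (Rle_dec y 0); [|lra].
  apply Rnot_lt_le. intro. nra.
Qed.

Lemma sq_le y d : 0 < d -> y * y <= d * d -> Rabs y <= d.
Proof. intros. apply Rabs_le. split; apply Rnot_lt_le; intro; nra. Qed.

Lemma up_alg bK w n Ss P : 0 < bK -> w < 0 -> n = Ss - w -> 0 < Ss -> 0 <= P ->
  2 * w * (0 - (bK * w * n - P)) <= - (2 * bK * Ss) * (w * w) + 0.
Proof.
  intros. subst n. assert (0 < w * w) by nra.
  assert (2 * w * P <= 0) by nra.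
  assert (- (2 * bK * w * w * (- w)) <= 0) by (assert (0 < - w) by lra; assert (0 < bK * w * w) by nra; nra).
  nra.
Qed.

Lemma x_alg b K a1 a2 ah m0 m1 m2 m3 m4 c s i1 i2 i3 r :
  0 < K -> 0 < s -> 0 <= i1 -> 0 <= i2 -> 0 <= i3 -> 0 <= r -> 0 <= c ->
  c <= m1 - m0 - a1 * (s+i1+i2+i3+r) -> c <= m2 - m0 - a2 * (s+i1+i2+i3+r) ->
  c <= m3 - m0 - ah * (s+i1+i2+i3+r) -> c <= m4 - m0 ->
  0 - (((b * (1 - (s+i1+i2+i3+r) / K) - a1 * i1 - a2 * i2 - ah * i3 - m0) * s) * (s+i1+i2+i3+r)
       - s * (b * (1 - (s+i1+i2+i3+r) / K) * (s+i1+i2+i3+r) - m0 * s - m1 * i1 - m2 * i2 - m3 * i3 - m4 * r))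
       / (s+i1+i2+i3+r) ^ 2
  <= - c * (1 - (1 - s / (s+i1+i2+i3+r))) * (1 - s / (s+i1+i2+i3+r)).
Proof.
  intros HK Hs H1 H2 H3 H4 Hc C1 C2 C3 C4.
  set (n := s+i1+i2+i3+r) in *.
  assert (Hn : 0 < n) by (unfold n; lra).
  set (Sig := (m1 - m0 - a1 * n) * i1 + (m2 - m0 - a2 * n) * i2 + (m3 - m0 - ah * n) * i3 + (m4 - m0) * r).
  assert (E : ((b * (1 - n / K) - a1 * i1 - a2 * i2 - ah * i3 - m0) * s) * n
       - s * (b * (1 - n / K) * n - m0 * s - m1 * i1 - m2 * i2 - m3 * i3 - m4 * r) = s * Sig).
  { unfold Sig, n. field. lra. }
  rewrite E.
  assert (Hsig : c * (n - s) <= Sig).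
  { replace (n - s) with (i1 + i2 + i3 + r) by (unfold n; ring). unfold Sig.
    assert (c * i1 <= (m1 - m0 - a1 * n) * i1) by (apply Rmult_le_compat_r; lra).
    assert (c * i2 <= (m2 - m0 - a2 * n) * i2) by (apply Rmult_le_compat_r; lra).
    assert (c * i3 <= (m3 - m0 - ah * n) * i3) by (apply Rmult_le_compat_r; lra).
    assert (c * r <= (m4 - m0) * r) by (apply Rmult_le_compat_r; lra). lra. }
  assert (E2 : - c * (1 - (1 - s / n)) * (1 - s / n) = 0 - s * (c * (n - s)) / n ^ 2) by (field; lra).
  rewrite E2. unfold Rdiv. apply Rplus_le_compat_l. apply Ropp_le_contravar.
  apply Rmult_le_compat_r. apply Rlt_le, Rinv_0_lt_compat. nra.
  apply Rmult_le_compat_l; lra.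
Qed.

Lemma v_alg bK n Ss P B Pm J l : 0 < bK -> 0 < l -> l <= n -> - B <= n - Ss <= B -> 0 <= P -> P <= Pm * J ->
  2 * (n - Ss) * (bK * (Ss - n) * n - P) <= - (2 * bK * l) * ((n - Ss) * (n - Ss)) + 2 * B * (Pm * J).
Proof.
  intros. assert (0 <= (n - Ss) * (n - Ss)) by apply Rle_0_sqr.
  assert (A1 : 2 * (n - Ss) * (bK * (Ss - n) * n) = - (2 * bK * n) * ((n - Ss) * (n - Ss))) by ring.
  assert (A2 : - (2 * bK * n) * ((n - Ss) * (n - Ss)) <= - (2 * bK * l) * ((n - Ss) * (n - Ss))).
  { apply Rmult_le_compat_r; auto. nra. }
  assert (A3 : - (n - Ss) * P <= B * P) by (apply Rmult_le_compat_r; lra).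
  assert (A4 : B * P <= B * (Pm * J)) by (apply Rmult_le_compat_l; lra).
  nra.
Qed.

Lemma frac_facts s n : 0 < s -> s <= n -> 0 <= 1 - s / n /\ 0 < 1 - (1 - s / n) /\ 1 - s / n <= 1.
Proof.
  intros. assert (0 < n) by lra.
  assert (s / n <= 1) by (apply (Rmult_le_reg_r n); [lra| unfold Rdiv; rewrite Rmult_assoc, Rinv_l; lra]).
  assert (0 < s / n) by (apply Rdiv_lt_0_compat; lra). lra.
Qed.

Lemma decay_step c y x q0 : 0 <= c -> 0 <= x -> q0 <= y -> - c * y * x <= - (c * q0) * x + 0.
Proof. intros. assert (c * q0 * x <= c * y * x) by (apply Rmult_le_compat_r; auto; apply Rmult_le_compat_l; auto). lra. Qed.

Lemma J_as_x s n : 0 < n -> n - s = (1 - s / n) * n.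
Proof. intros. field. lra. Qed.

Lemma abs_mul_le c x M : Rabs x <= M -> Rabs (c * x) <= Rabs c * M.
Proof. intros. rewrite Rabs_mult. apply Rmult_le_compat_l; auto. apply Rabs_pos. Qed.

Lemma lin_bnd b K c1 c2 c3 c4 k s i1 i2 i3 r M cs ks : 0 < b -> 0 < K -> 0 <= M ->
  Rabs s <= M -> Rabs i1 <= M -> Rabs i2 <= M -> Rabs i3 <= M -> Rabs r <= M ->
  Rabs c1 + Rabs c2 + Rabs c3 + Rabs c4 <= cs -> Rabs k <= ks ->
  Rabs (b * (1 - (s+i1+i2+i3+r)/K) + c1 * s + c2 * i1 + c3 * i2 + c4 * i3 + k) <= b + b * (5 * M) / K + cs * M + ks.
Proof.
  intros Hb HK HM Hs H1 H2 H3 H4 Hc Hk.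
  pose proof (abs_mul_le c1 s M Hs). pose proof (abs_mul_le c2 i1 M H1).
  pose proof (abs_mul_le c3 i2 M H2). pose proof (abs_mul_le c4 i3 M H3).
  assert (Hn : Rabs (s+i1+i2+i3+r) <= 5 * M).
  { apply Rabs_le_between in Hs; apply Rabs_le_between in H1; apply Rabs_le_between in H2;
    apply Rabs_le_between in H3; apply Rabs_le_between in H4. apply Rabs_le; lra. }
  assert (Hbn : Rabs (b * (1 - (s+i1+i2+i3+r)/K)) <= b + b * (5 * M) / K).
  { replace (b * (1 - (s+i1+i2+i3+r)/K)) with (b + (- (b / K)) * (s+i1+i2+i3+r)) by (field; lra).
    eapply Rle_trans. apply Rabs_triang. rewrite (Rabs_right b) by lra.
    pose proof (abs_mul_le (- (b / K)) _ _ Hn) as HH. rewrite Rabs_Ropp, (Rabs_right (b / K)) in HH.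
    replace (b * (5 * M) / K) with (b / K * (5 * M)) by (field; lra). lra.
    apply Rle_ge, Rlt_le, Rdiv_lt_0_compat; lra. }
  set (A := b * (1 - (s+i1+i2+i3+r)/K)) in *.
  pose proof (Rabs_triang A (c1 * s)).
  pose proof (Rabs_triang (A + c1 * s) (c2 * i1)).
  pose proof (Rabs_triang (A + c1 * s + c2 * i1) (c3 * i2)).
  pose proof (Rabs_triang (A + c1 * s + c2 * i1 + c3 * i2) (c4 * i3)).
  pose proof (Rabs_triang (A + c1 * s + c2 * i1 + c3 * i2 + c4 * i3) k).
  assert ((Rabs c1 + Rabs c2 + Rabs c3 + Rabs c4) * M <= cs * M) by (apply Rmult_le_compat_r; auto).
  lra.
Qed.


Lemma asym (b K a1 a2 ah m0 m1 m2 m3 m4 : R) (S I1 I2 I12 Rc N : R -> R) :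
  0 < b -> 0 < K -> 0 < a1 -> 0 < a2 -> 0 < ah -> 0 < m0 ->
  m0 < m4 -> m4 < m1 -> m4 < m2 -> m4 < m3 -> m1 < b -> m2 < b -> m3 < b ->
  K / b * (b - m0) < Rmin ((m1 - m0) / a1) (Rmin ((m2 - m0) / a2) ((m3 - m0) / ah)) ->
  (forall t, 0 <= t -> 0 < S t /\ 0 <= I1 t /\ 0 <= I2 t /\ 0 <= I12 t /\ 0 <= Rc t) ->
  (forall t, N t = S t + I1 t + I2 t + I12 t + Rc t) ->
  (forall t, 0 < t -> is_derive S t ((b * (1 - N t / K) - a1 * I1 t - a2 * I2 t - ah * I12 t - m0) * S t)) ->
  (forall t, 0 < t -> is_derive N t (b * (1 - N t / K) * N t - m0 * S t - m1 * I1 t - m2 * I2 t - m3 * I12 t - m4 * Rc t)) ->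
  (forall eps, 0 < eps -> exists T, forall t, T <= t -> N t - S t <= eps) /\
  (forall eps, 0 < eps -> exists T, forall t, T <= t -> Rabs (N t - K / b * (b - m0)) <= eps).
Proof.
  intros Hb HK Ha1 Ha2 Hah Hm0 H04 H41 H42 H43 H1b H2b H3b Hthr Hpos HN HdS HdN.
  set (Ss := K / b * (b - m0)) in *.
  assert (HSs : 0 < Ss) by (unfold Ss; apply Rmult_lt_0_compat; [apply Rdiv_lt_0_compat|]; lra).
  assert (Npos : forall t, 0 <= t -> 0 < N t) by (intros t Ht; rewrite HN; destruct (Hpos t Ht) as (?&?&?&?&?); lra).
  pose (dN := fun u => b * (1 - N u / K) * N u - m0 * S u - m1 * I1 u - m2 * I2 u - m3 * I12 u - m4 * Rc u).
  pose (P := fun u => (m1 - m0) * I1 u + (m2 - m0) * I2 u + (m3 - m0) * I12 u + (m4 - m0) * Rc u).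
  assert (dNU : forall u, 0 <= u -> dN u = b / K * (Ss - N u) * N u - P u).
  { intros u Hu. unfold dN, P, Ss. rewrite !HN. destruct (Hpos u Hu) as (?&?&?&?&?).
    apply alg_upper; lra. }
  assert (Pnn : forall u, 0 <= u -> 0 <= P u).
  { intros u Hu. unfold P. destruct (Hpos u Hu) as (?&?&?&?&?).
    assert (0 <= (m1 - m0) * I1 u) by (apply Rmult_le_pos; lra).
    assert (0 <= (m2 - m0) * I2 u) by (apply Rmult_le_pos; lra).
    assert (0 <= (m3 - m0) * I12 u) by (apply Rmult_le_pos; lra).
    assert (0 <= (m4 - m0) * Rc u) by (apply Rmult_le_pos; lra). lra. }
  set (mx := Rmax m1 (Rmax m2 m3)).
  assert (Hmx1 : m1 <= mx) by apply Rmax_l.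
  assert (Hmx2 : m2 <= mx) by (unfold mx; eapply Rle_trans; [apply Rmax_l|apply Rmax_r]).
  assert (Hmx3 : m3 <= mx) by (unfold mx; eapply Rle_trans; [apply Rmax_r|apply Rmax_r]).
  assert (Hmxb : mx < b) by (unfold mx; repeat apply Rmax_lub_lt; auto).
  set (L := K * (b - mx) / b).
  assert (HL : 0 < L) by (unfold L; apply Rdiv_lt_0_compat; [apply Rmult_lt_0_compat|]; lra).
  set (l := Rmin (N 1) L).
  assert (Hl : 0 < l) by (unfold l; apply Rmin_pos; auto; apply Npos; lra).
  assert (Hlow : forall t, 1 <= t -> l <= N t).
  { intros t Ht.
    assert (M := mono (fun u => q (N u - l)) (fun u => 2 * Rmin (N u - l) 0 * (dN u - 0)) 1 t Ht).
    cbv beta in M.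
    assert (q (N t - l) <= q (N 1 - l)).
    { apply M.
      - intros u Hu. apply (D_qf (fun u => N u - l)). apply (D_minus N (fun _ => l)). apply HdN; lra. apply D_const.
      - intros u Hu. unfold Rmin at 1. destruct (Rle_dec (N u - l) 0) as [Hle|Hgt]; [|lra].
        assert (0 <= dN u).
        { unfold dN. rewrite !HN. destruct (Hpos u ltac:(lra)) as (?&?&?&?&?).
          assert (Hlr : l <= L) by apply Rmin_r. assert (Hnl : N u <= L) by lra.
          rewrite HN in Hnl.
          pose proof (alg_lower b K m0 m1 m2 m3 m4 mx (S u) (I1 u) (I2 u) (I12 u) (Rc u)) as AL.
          assert (0 <= b - mx - b * (S u + I1 u + I2 u + I12 u + Rc u) / K).
          { unfold L in Hnl. apply Rmult_le_compat_l with (r := b / K) in Hnl; [|apply Rlt_le, Rdiv_lt_0_compat; lra].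
            replace (b / K * (K * (b - mx) / b)) with (b - mx) in Hnl by (field; lra).
            unfold Rdiv in *. lra. }
          assert (0 <= (S u + I1 u + I2 u + I12 u + Rc u) * (b - mx - b * (S u + I1 u + I2 u + I12 u + Rc u) / K)).
          { apply Rmult_le_pos; lra. }
          lra. }
        assert (0 <= dN u - 0) by lra. nra. }
    assert (Hll : l <= N 1) by apply Rmin_l. assert (q (N 1 - l) = 0) by (apply q_zero; lra).
    assert (q (N t - l) <= 0) by lra. apply q_pos_neg in H1. lra. }
  set (al := 2 * (b / K) * Ss).
  assert (Hal : 0 < al) by (unfold al; assert (0 < b / K) by (apply Rdiv_lt_0_compat; lra); nra).
  assert (dU : forall t, 1 <= t -> is_derive (fun u => q (Ss - N u)) t (2 * Rmin (Ss - N t) 0 * (0 - dN t))).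
  { intros t Ht. apply (D_qf (fun u => Ss - N u)). apply (D_minus (fun _ => Ss) N). apply D_const. apply HdN; lra. }
  assert (dUb : forall t, 1 <= t -> 2 * Rmin (Ss - N t) 0 * (0 - dN t) <= - al * q (Ss - N t) + 0).
  { intros t Ht. unfold q, Rmin. destruct (Rle_dec (Ss - N t) 0) as [Hle|Hgt].
    - destruct (Req_dec (Ss - N t) 0) as [E|E].
      + rewrite E. rewrite !Rmult_0_r, Rmult_0_l. lra.
      + rewrite dNU by lra. unfold al.
        apply (up_alg (b / K) (Ss - N t) (N t) Ss (P t)).
        apply Rdiv_lt_0_compat; lra. lra. ring. lra. apply Pnn; lra.
    - rewrite !Rmult_0_r, Rmult_0_l. lra. }
  assert (Ubnd := decay (fun u => q (Ss - N u)) _ 1 al 0 Hal dU dUb).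
  cbv beta in Ubnd.
  set (U1 := Rabs (q (Ss - N 1) - 0 / al)).
  assert (HU1 : 0 <= U1) by apply Rabs_pos.
  set (Nmax := Ss + U1 + 1).
  assert (HNmax : forall t, 1 <= t -> N t <= Nmax).
  { intros t Ht. specialize (Ubnd t Ht).
    assert (exp (- al * (t - 1)) <= 1).
    { destruct (Req_dec t 1) as [->|].
      - replace (- al * (1 - 1)) with 0 by ring. rewrite exp_0; lra.
      - assert (exp (- al * (t - 1)) < exp 0) by (apply exp_increasing; nra). rewrite exp_0 in H0; lra. }
    assert (U1 * exp (- al * (t - 1)) <= U1) by (pose proof (exp_pos (- al * (t - 1))); nra).
    assert (Z : 0 / al = 0) by (unfold Rdiv; ring).
    assert (q (Ss - N t) <= U1)  by (change (Rabs (q (Ss - N 1) - 0 / al)) with U1 in Ubnd; lra).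
    apply q_le_bound in H1; auto. unfold Nmax; lra. }
  assert (Uev : forall d, 0 < d -> exists T, forall t, T <= t -> N t <= Ss + d).
  { intros d Hd. destruct (decay_ev (fun u => q (Ss - N u)) _ 1 al 0 Hal dU dUb (d * d)) as [T HT].
    nra. exists T. intros t Ht. specialize (HT t Ht). cbv beta in HT.
    unfold Rdiv in HT; rewrite Rmult_0_l, Rplus_0_l in HT.
    apply q_le_sq in HT; auto. lra. }
  set (th := Rmin ((m1 - m0) / a1) (Rmin ((m2 - m0) / a2) ((m3 - m0) / ah))) in *.
  set (d0 := (th - Ss) / 2).
  assert (Hd0 : 0 < d0) by (unfold d0; lra).
  assert (Hth1 : a1 * th <= m1 - m0).
  { assert (th <= (m1 - m0) / a1) by apply Rmin_l.
    apply Rmult_le_compat_l with (r := a1) in H; [|lra]. replace (a1 * ((m1 - m0) / a1)) with (m1 - m0) in H by (field; lra). lra. }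
  assert (Hth2 : a2 * th <= m2 - m0).
  { assert (th <= (m2 - m0) / a2) by (eapply Rle_trans; [apply Rmin_r|apply Rmin_l]).
    apply Rmult_le_compat_l with (r := a2) in H; [|lra]. replace (a2 * ((m2 - m0) / a2)) with (m2 - m0) in H by (field; lra). lra. }
  assert (Hth3 : ah * th <= m3 - m0).
  { assert (th <= (m3 - m0) / ah) by (eapply Rle_trans; [apply Rmin_r|apply Rmin_r]).
    apply Rmult_le_compat_l with (r := ah) in H; [|lra]. replace (ah * ((m3 - m0) / ah)) with (m3 - m0) in H by (field; lra). lra. }
  destruct (Uev d0 Hd0) as [T1' HT1'].
  set (T1 := Rmax 1 T1').
  assert (HT1 : forall t, T1 <= t -> 1 <= t /\ N t <= Ss + d0).
  { intros t Ht. pose proof (Rmax_l 1 T1'); pose proof (Rmax_r 1 T1'). split. unfold T1 in Ht; lra. apply HT1'. unfold T1 in Ht; lra. }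
  set (c := Rmin (a1 * d0) (Rmin (a2 * d0) (Rmin (ah * d0) (m4 - m0)))).
  assert (Hc : 0 < c).
  { unfold c. repeat apply Rmin_pos; try apply Rmult_lt_0_compat; lra. }
  assert (Hc1 : c <= a1 * d0) by apply Rmin_l.
  assert (Hc2 : c <= a2 * d0) by (eapply Rle_trans; [apply Rmin_r|apply Rmin_l]).
  assert (Hc3 : c <= ah * d0) by (eapply Rle_trans; [apply Rmin_r|eapply Rle_trans; [apply Rmin_r|apply Rmin_l]]).
  assert (Hc4 : c <= m4 - m0) by (eapply Rle_trans; [apply Rmin_r|eapply Rle_trans; [apply Rmin_r|apply Rmin_r]]).
  pose (x := fun u => 1 - S u / N u).
  pose (dx := fun u => 0 - ((b * (1 - N u / K) - a1 * I1 u - a2 * I2 u - ah * I12 u - m0) * S u * N u - S u * dN u) / N u ^ 2).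
  assert (Dx : forall t, 0 < t -> is_derive x t (dx t)).
  { intros t Ht. unfold x, dx. apply (D_minus (fun _ => 1) (fun u => S u / N u)). apply D_const.
    apply is_derive_div. apply HdS; auto. apply HdN; auto. pose proof (Npos t ltac:(lra)); lra. }
  assert (dxb : forall t, T1 <= t -> dx t <= - c * (1 - x t) * x t).
  { intros t Ht. destruct (HT1 t Ht) as [Ht1 HNt].
    destruct (Hpos t ltac:(lra)) as (?&?&?&?&?).
    unfold dx, x, dN. rewrite !HN. rewrite HN in HNt.
    apply x_alg; try lra; try (unfold Rdiv; nra).
    - assert (a1 * (S t + I1 t + I2 t + I12 t + Rc t) <= a1 * (Ss + d0)) by (apply Rmult_le_compat_l; lra).
      unfold d0 in *; lra.
    - assert (a2 * (S t + I1 t + I2 t + I12 t + Rc t) <= a2 * (Ss + d0)) by (apply Rmult_le_compat_l; lra).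
      unfold d0 in *; lra.
    - assert (ah * (S t + I1 t + I2 t + I12 t + Rc t) <= ah * (Ss + d0)) by (apply Rmult_le_compat_l; lra).
      unfold d0 in *; lra. }
  assert (xf : forall t, 0 <= t -> 0 <= x t /\ 0 < 1 - x t /\ x t <= 1).
  { intros t Ht. unfold x. apply frac_facts. apply Hpos; auto. rewrite HN. destruct (Hpos t Ht) as (?&?&?&?&?). lra. }
  assert (Xmono : forall t, T1 <= t -> x t <= x T1).
  { intros t Ht. apply (mono x dx T1 t Ht).
    - intros u Hu. apply Dx. pose proof (HT1 u ltac:(lra)). lra.
    - intros u Hu. pose proof (dxb u ltac:(lra)). pose proof (HT1 u ltac:(lra)).
      destruct (xf u ltac:(lra)) as (?&?&?).
      assert (0 <= c * (1 - x u) * x u) by (apply Rmult_le_pos; [apply Rmult_le_pos|]; lra). lra. }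
  set (q0 := 1 - x T1).
  assert (Hq0 : 0 < q0) by (unfold q0; apply xf; pose proof (HT1 T1 (Rle_refl _)); lra).
  assert (Hcq : 0 < c * q0) by (apply Rmult_lt_0_compat; auto).
  assert (Xev := decay_ev x dx T1 (c * q0) 0 Hcq).
  assert (Jev : forall eps, 0 < eps -> exists T, forall t, T <= t -> N t - S t <= eps).
  { intros eps He.
    assert (HSd : 0 < Ss + d0) by lra.
    destruct (Xev) with (eps := eps / (Ss + d0)) as [Tx HTx].
    - intros t Ht. apply Dx. pose proof (HT1 t Ht); lra.
    - intros t Ht. eapply Rle_trans. apply dxb; auto. apply decay_step. lra. apply xf. pose proof (HT1 t Ht); lra.
      pose proof (Xmono t Ht). unfold q0. lra.
    - apply Rdiv_lt_0_compat; lra.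
    - exists (Rmax T1 Tx). intros t Ht. pose proof (Rmax_l T1 Tx); pose proof (Rmax_r T1 Tx).
      specialize (HTx t ltac:(lra)). destruct (HT1 t ltac:(lra)) as [Ht1 HNt].
      rewrite (J_as_x (S t) (N t)) by (apply Npos; lra). fold (x t).
      assert (Z : 0 / (c * q0) = 0) by (unfold Rdiv; ring). rewrite Z, Rplus_0_l in HTx.
      destruct (xf t ltac:(lra)) as (?&?&?).
      apply Rle_trans with (x t * (Ss + d0)). apply Rmult_le_compat_l; lra.
      apply Rmult_le_compat_r with (r := Ss + d0) in HTx; [|lra].
      replace (eps / (Ss + d0) * (Ss + d0)) with eps in HTx by (field; lra). lra. }
  split; auto.
  set (Pm := m1 + m2 + m3 + m4).
  assert (HPm : 0 < Pm) by (unfold Pm; lra).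
  assert (PJ : forall u, 0 <= u -> P u <= Pm * (N u - S u)).
  { intros u Hu. unfold P. rewrite HN. destruct (Hpos u Hu) as (?&?&?&?&?).
    assert ((m1 - m0) * I1 u <= Pm * I1 u) by (apply Rmult_le_compat_r; unfold Pm; lra).
    assert ((m2 - m0) * I2 u <= Pm * I2 u) by (apply Rmult_le_compat_r; unfold Pm; lra).
    assert ((m3 - m0) * I12 u <= Pm * I12 u) by (apply Rmult_le_compat_r; unfold Pm; lra).
    assert ((m4 - m0) * Rc u <= Pm * Rc u) by (apply Rmult_le_compat_r; unfold Pm; lra).
    replace (S u + I1 u + I2 u + I12 u + Rc u - S u) with (I1 u + I2 u + I12 u + Rc u) by ring.
    lra. }
  set (B := Ss + (Ss + d0)).
  assert (HB : 0 < B) by (unfold B; lra).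
  set (al2 := 2 * (b / K) * l).
  assert (Hal2 : 0 < al2) by (unfold al2; assert (0 < b / K) by (apply Rdiv_lt_0_compat; lra); nra).
  intros e He.
  set (eps := e * e).
  assert (Heps : 0 < eps) by (unfold eps; nra).
  set (eta := al2 * eps / (4 * B * Pm)).
  assert (Heta : 0 < eta) by (unfold eta; apply Rdiv_lt_0_compat; nra).
  destruct (Jev eta Heta) as [T2 HT2].
  set (T3 := Rmax T1 T2).
  assert (HT3 : forall t, T3 <= t -> T1 <= t /\ T2 <= t).
  { intros t Ht. pose proof (Rmax_l T1 T2); pose proof (Rmax_r T1 T2). unfold T3 in Ht. lra. }
  set (V := fun u => (N u - Ss) * (N u - Ss)).
  set (dV := fun u => (dN u - 0) * (N u - Ss) + (N u - Ss) * (dN u - 0)).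
  assert (DV : forall t, T3 <= t -> is_derive V t (dV t)).
  { intros t Ht. destruct (HT3 t Ht) as [H1 _]. destruct (HT1 t H1) as [H2 _].
    unfold V, dV. apply (D_mult (fun u => N u - Ss) (fun u => N u - Ss));
    apply (D_minus N (fun _ => Ss)); try apply HdN; try apply D_const; lra. }
  assert (dVb : forall t, T3 <= t -> dV t <= - al2 * V t + 2 * B * (Pm * eta)).
  { intros t Ht. destruct (HT3 t Ht) as [H1 H2']. destruct (HT1 t H1) as [H3 H4].
    unfold dV, V. rewrite dNU by lra.
    replace ((b / K * (Ss - N t) * N t - P t - 0) * (N t - Ss) + (N t - Ss) * (b / K * (Ss - N t) * N t - P t - 0))
      with (2 * (N t - Ss) * (b / K * (Ss - N t) * N t - P t)) by ring.
    eapply Rle_trans. apply (v_alg (b / K) (N t) Ss (P t) B Pm (N t - S t) l).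
    apply Rdiv_lt_0_compat; lra. auto. apply Hlow; auto.
    split. unfold B. pose proof (Npos t ltac:(lra)). lra. unfold B. lra.
    apply Pnn; lra. apply PJ; lra.
    unfold al2. apply Rplus_le_compat_l. apply Rmult_le_compat_l. lra. apply Rmult_le_compat_l. lra. apply HT2; auto. }
  destruct (decay_ev V dV T3 al2 (2 * B * (Pm * eta)) Hal2 DV dVb (eps / 2)) as [T4 HT4]. lra.
  exists T4. intros t Ht. specialize (HT4 t Ht).
  assert (E : 2 * B * (Pm * eta) / al2 = eps / 2) by (unfold eta; field; repeat split; lra).
  rewrite E in HT4. unfold V in HT4.
  apply sq_le; auto. unfold eps in HT4. lra.
Qed.


Ltac absr := repeat (rewrite Rabs_Ropp); repeat (rewrite Rabs_R0); repeat (rewrite Rabs_right; [|lra]).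

Theorem mainTheorem6
  (b K a1 a2 a3 be1 be2 g1 g2 e1 e2 r1 r2 r3 m0 m1' m2' m3' m4' : R)
  (Hpos : 0 < b /\ 0 < K /\ 0 < a1 /\ 0 < a2 /\ 0 < a3 /\ 0 < be1 /\ 0 < be2 /\
          0 < g1 /\ 0 < g2 /\ 0 < e1 /\ 0 < e2 /\ 0 < r1 /\ 0 < r2 /\ 0 < r3 /\
          0 < m0 /\ 0 < m1' /\ 0 < m2' /\ 0 < m3' /\ 0 < m4')
  (Hb : m0 < b /\ r1 + m1' < b /\ r2 + m2' < b /\ r3 + m3' < b /\ m4' < b)
  (Hmu : m0 < m4' /\ m4' < m1' /\ m4' < m2' /\ m4' < m3')
  (Hsig : (r1 + m1' - m0) / a1 < (r2 + m2' - m0) / a2 /\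
          (r2 + m2' - m0) / a2 < (r3 + m3' - m0) / a3)
  (Hthr : K / b * (b - m0) <
          Rmin ((m1' - m0) / a1)
               (Rmin ((m2' - m0) / a2) ((m3' - m0) / (a3 + be1 + be2))))
  (S I1 I2 I12 Rc : R -> R)
  (Hsol : is_solution b K a1 a2 a3 be1 be2 g1 g2 e1 e2 r1 r2 r3
            m0 m1' m2' m3' m4' S I1 I2 I12 Rc)
  (HS0 : 0 < S 0) (HI10 : 0 <= I1 0) (HI20 : 0 <= I2 0)
  (HI120 : 0 <= I12 0) (HR0 : 0 <= Rc 0) :
  is_lim I1 p_infty 0 /\ is_lim I2 p_infty 0 /\ is_lim I12 p_infty 0 /\
  is_lim Rc p_infty 0 /\ is_lim S p_infty (K / b * (b - m0)).
Proof.
  destruct Hpos as (Hb0&HK&Ha1&Ha2&Ha3&Hbe1&Hbe2&Hg1&Hg2&He1&He2&Hr1&Hr2&Hr3&Hm0&Hm1&Hm2&Hm3&Hm4).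
  destruct Hb as (Hb0'&Hb1&Hb2&Hb3&Hb4). destruct Hmu as (H04&H41&H42&H43).
  unfold is_solution in Hsol. destruct Hsol as (c1&c2&c3&c4&c5&Hd).
  assert (Pos : forall t, 0 <= t -> 0 < S t /\ 0 <= I1 t /\ 0 <= I2 t /\ 0 <= I12 t /\ 0 <= Rc t).
  { apply (pos_generic S I1 I2 I12 Rc
      (fun t => b * (1 - (S t + I1 t + I2 t + I12 t + Rc t) / K) - a1 * I1 t - a2 * I2 t - (be1 + be2 + a3) * I12 t - m0)
      (fun t => b * (1 - (S t + I1 t + I2 t + I12 t + Rc t) / K) + a1 * S t - e1 * I12 t - g1 * I2 t - (r1 + m1'))
      (fun t => b * (1 - (S t + I1 t + I2 t + I12 t + Rc t) / K) + a2 * S t - e2 * I12 t - g2 * I1 t - (r2 + m2'))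
      (fun t => b * (1 - (S t + I1 t + I2 t + I12 t + Rc t) / K) + a3 * S t + e1 * I1 t + e2 * I2 t - (r3 + m3'))
      (fun t => b * (1 - (S t + I1 t + I2 t + I12 t + Rc t) / K) - m4')
      be1 be2 (g1 + g2) r1 r2 r3); try lra; auto.
    intros T HT.
    assert (exS : forall u, 0 < u -> ex_derive S u) by (intros u Hu; eexists; exact (proj1 (Hd u Hu))).
    assert (ex1 : forall u, 0 < u -> ex_derive I1 u) by (intros u Hu; eexists; exact (proj1 (proj2 (Hd u Hu)))).
    assert (ex2 : forall u, 0 < u -> ex_derive I2 u) by (intros u Hu; eexists; exact (proj1 (proj2 (proj2 (Hd u Hu))))).
    assert (ex3 : forall u, 0 < u -> ex_derive I12 u) by (intros u Hu; eexists; exact (proj1 (proj2 (proj2 (proj2 (Hd u Hu)))))).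
    assert (ex4 : forall u, 0 < u -> ex_derive Rc u) by (intros u Hu; eexists; exact (proj2 (proj2 (proj2 (proj2 (Hd u Hu)))))).
    destruct (bnd S T HT c1 exS) as [M0 [HM0 B0]].
    destruct (bnd I1 T HT c2 ex1) as [M1 [HM1 B1]].
    destruct (bnd I2 T HT c3 ex2) as [M2 [HM2 B2]].
    destruct (bnd I12 T HT c4 ex3) as [M3 [HM3 B3]].
    destruct (bnd Rc T HT c5 ex4) as [M4 [HM4 B4]].
    set (M := M0 + M1 + M2 + M3 + M4).
    set (Cs := a1 + a2 + a3 + be1 + be2 + e1 + e2 + g1 + g2).
    set (ks := m0 + (r1 + m1') + (r2 + m2') + (r3 + m3') + m4').
    exists (b + b * (5 * M) / K + Cs * M + ks). intros t Ht.
    specialize (B0 t Ht); specialize (B1 t Ht); specialize (B2 t Ht); specialize (B3 t Ht); specialize (B4 t Ht).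
    assert (HM : 0 <= M) by (unfold M; lra).
    assert (Rabs (S t) <= M) by (unfold M; lra). assert (Rabs (I1 t) <= M) by (unfold M; lra).
    assert (Rabs (I2 t) <= M) by (unfold M; lra). assert (Rabs (I12 t) <= M) by (unfold M; lra).
    assert (Rabs (Rc t) <= M) by (unfold M; lra).
    repeat split.
    - replace (b * (1 - (S t + I1 t + I2 t + I12 t + Rc t) / K) - a1 * I1 t - a2 * I2 t - (be1 + be2 + a3) * I12 t - m0)
        with (b * (1 - (S t + I1 t + I2 t + I12 t + Rc t) / K) + 0 * S t + (- a1) * I1 t + (- a2) * I2 t + (- (be1 + be2 + a3)) * I12 t + (- m0)) by ring.
      apply lin_bnd; auto; absr; unfold Cs, ks; lra.
    - replace (b * (1 - (S t + I1 t + I2 t + I12 t + Rc t) / K) + a1 * S t - e1 * I12 t - g1 * I2 t - (r1 + m1'))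
        with (b * (1 - (S t + I1 t + I2 t + I12 t + Rc t) / K) + a1 * S t + 0 * I1 t + (- g1) * I2 t + (- e1) * I12 t + (- (r1 + m1'))) by ring.
      apply lin_bnd; auto; absr; unfold Cs, ks; lra.
    - replace (b * (1 - (S t + I1 t + I2 t + I12 t + Rc t) / K) + a2 * S t - e2 * I12 t - g2 * I1 t - (r2 + m2'))
        with (b * (1 - (S t + I1 t + I2 t + I12 t + Rc t) / K) + a2 * S t + (- g2) * I1 t + 0 * I2 t + (- e2) * I12 t + (- (r2 + m2'))) by ring.
      apply lin_bnd; auto; absr; unfold Cs, ks; lra.
    - replace (b * (1 - (S t + I1 t + I2 t + I12 t + Rc t) / K) + a3 * S t + e1 * I1 t + e2 * I2 t - (r3 + m3'))
        with (b * (1 - (S t + I1 t + I2 t + I12 t + Rc t) / K) + a3 * S t + e1 * I1 t + e2 * I2 t + 0 * I12 t + (- (r3 + m3'))) by ring.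
      apply lin_bnd; auto; absr; unfold Cs, ks; lra.
    - replace (b * (1 - (S t + I1 t + I2 t + I12 t + Rc t) / K) - m4')
        with (b * (1 - (S t + I1 t + I2 t + I12 t + Rc t) / K) + 0 * S t + 0 * I1 t + 0 * I2 t + 0 * I12 t + (- m4')) by ring.
      apply lin_bnd; auto; absr; unfold Cs, ks; lra. }
  pose (N := fun t => S t + I1 t + I2 t + I12 t + Rc t).
  assert (Hthr' : K / b * (b - m0) <
          Rmin ((m1' - m0) / a1) (Rmin ((m2' - m0) / a2) ((m3' - m0) / (be1 + be2 + a3)))).
  { replace (be1 + be2 + a3) with (a3 + be1 + be2) by ring. exact Hthr. }
  destruct (asym b K a1 a2 (be1 + be2 + a3) m0 m1' m2' m3' m4' S I1 I2 I12 Rc N) as [Jev Nev];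
    try lra; auto.
  - intros t Ht. exact (proj1 (Hd t Ht)).
  - intros t Ht. destruct (Hd t Ht) as (d0&d1&d2&d3&d4).
    eapply D_eq. unfold N.
    apply (D_plus (fun t => S t + I1 t + I2 t + I12 t) Rc); [|exact d4].
    apply (D_plus (fun t => S t + I1 t + I2 t) I12); [|exact d3].
    apply (D_plus (fun t => S t + I1 t) I2); [|exact d2].
    apply (D_plus S I1); [exact d0|exact d1].
    unfold N. ring.
  - assert (Lim0 : forall f : R -> R, (forall t, 0 <= t -> 0 <= f t /\ f t <= N t - S t) -> is_lim f p_infty 0).
    { intros f Hf. apply is_lim_spec. intros eps.
      destruct (Jev (eps / 2)) as [T HT]. pose proof (cond_pos eps); lra.
      exists (Rmax T 0). intros t Ht. pose proof (Rmax_l T 0); pose proof (Rmax_r T 0).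
      destruct (Hf t ltac:(lra)) as [Hf1 Hf2]. specialize (HT t ltac:(lra)).
      rewrite Rminus_0_r, Rabs_right by lra. pose proof (cond_pos eps); lra. }
    refine (conj (Lim0 I1 _) (conj (Lim0 I2 _) (conj (Lim0 I12 _) (conj (Lim0 Rc _) _))));
      try (intros t Ht; destruct (Pos t Ht) as (?&?&?&?&?); unfold N; split; lra).
    apply is_lim_spec. intros eps.
    destruct (Jev (eps / 2)) as [T HT]. pose proof (cond_pos eps); lra.
    destruct (Nev (eps / 3)) as [T' HT']. pose proof (cond_pos eps); lra.
    exists (Rmax (Rmax T T') 0). intros t Ht. pose proof (Rmax_l T T'); pose proof (Rmax_r T T').
    pose proof (Rmax_l (Rmax T T') 0); pose proof (Rmax_r (Rmax T T') 0).
    specialize (HT t ltac:(lra)). specialize (HT' t ltac:(lra)).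
    assert (0 <= N t - S t) by (destruct (Pos t ltac:(lra)) as (?&?&?&?&?); unfold N; lra).
    apply Rabs_le_between in HT'. pose proof (cond_pos eps).
    apply Rabs_lt_between. split; lra.
Qed.
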